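(* For any fixed $m$, any fixed $k<m$ and any fixed $p\in(0,1)$, with $P\sim(\mathrm{IC}_p)^n$, $$\Pr(\mathrm{CORE}(P)=\mathcal A_k)=1-\exp(-\Theta(n))\quad\text{and}\quad\Pr(\mathrm{EJR{+}}(P)=\mathcal A_k)=1-\exp(-\Theta(n)).$$
   Context: $\mathcal A=[m]$, $\mathcal A_k$ the $k$-subsets. $\mathrm{IC}_p$ is the distribution over $2^{\mathcal A}$ in which each alternative is independently included with probability $p$; $P=(A_1,\dots,A_n)$ has i.i.d. ballots from $\mathrm{IC}_p$. $W\in\mathrm{CORE}(P)$ iff for every nonempty $N'\subseteq[n]$ and $W'\subseteq\mathcal A$ with $|W'|/k\le|N'|/n$ some $j\in N'$ has $|A_j\cap W'|\le|A_j\cap W|$. $W\in\mathrm{EJR{+}}(P)$ iff there are no $a\in\mathcal A\setminus W$, $\ell\ge1$, $N'\subseteq[n]$ with $|N'|\ge\ell n/k$ such that every $j\in N'$ has $a\in A_j$ and $|A_j\cap W|<\ell$. Asymptotics as $n\to\infty$. *)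

(* Defs.v *)
From HB Require Import structures.
From mathcomp Require Import all_boot all_order all_algebra.
From mathcomp Require Import boolp classical_sets reals.
From mathcomp Require Import sequences exp.
Unset Printing Implicit Defensive.
Import Order.TTheory GRing.Theory Num.Theory.
Local Open Scope ring_scope.
Local Open Scope classical_set_scope.

Definition profile (n m : nat) := {ffun 'I_n -> {set 'I_m}}.

Definition committees (m k : nat) : set {set 'I_m} := [set W | #|W| = k].

Definition in_core (n m k : nat) (P : profile n m) (W : {set 'I_m}) : Prop :=
  #|W| = k /\
  forall (N' : {set 'I_n}) (W' : {set 'I_m}),
    (0 < #|N'|)%N ->
    ((#|W'|%:R / k%:R : rat) <= #|N'|%:R / n%:R) ->
    exists2 j, j \in N' & (#|P j :&: W'| <= #|P j :&: W|)%N.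

Definition CORE (n m k : nat) (P : profile n m) : set {set 'I_m} :=
  [set W | in_core n m k P W].

Definition in_EJRp (n m k : nat) (P : profile n m) (W : {set 'I_m}) : Prop :=
  #|W| = k /\
  ~ (exists (a : 'I_m) (l : nat) (N' : {set 'I_n}),
       [/\ a \notin W, (1 <= l)%N,
           ((l%:R * n%:R / k%:R : rat) <= #|N'|%:R) &
           forall j, j \in N' -> a \in P j /\ (#|P j :&: W| < l)%N]).

Definition EJRp (n m k : nat) (P : profile n m) : set {set 'I_m} :=
  [set W | in_EJRp n m k P W].

(* IC_p: each alternative independently included with probability p. *)
Definition IC (R : realType) (m : nat) (p : R) (A : {set 'I_m}) : R :=
  p ^+ #|A| * (1 - p) ^+ (m - #|A|).

Definition PrIC (R : realType) (n m : nat) (p : R) (E : profile n m -> Prop) : R :=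
  \sum_(P : profile n m | `[< E P >]) \prod_(j < n) IC R m p (P j).

(* "q_n = 1 - exp(-Theta(n))": there are c1, c2 > 0 such that eventually
   exp(-c2 n) <= 1 - q_n <= exp(-c1 n). *)
Definition one_minus_exp_neg_Theta_n (R : realType) (q : nat -> R) : Prop :=
  exists (c1 c2 : R) (N : nat), 0 < c1 /\ 0 < c2 /\
    forall n, (N <= n)%N ->
      expR (- (c2 * n%:R)) <= 1 - q n <= expR (- (c1 * n%:R)).

(* Main.v *)
Require Import Defs.
From HB Require Import structures.
From mathcomp Require Import all_boot all_order all_algebra perm.
From mathcomp Require Import boolp classical_sets reals.
From mathcomp Require Import sequences exp.
From mathcomp Require Import lra zify.
Import Order.TTheory GRing.Theory Num.Theory.
Local Open Scope ring_scope.
Section Cher.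
Variable (R : realType).

Lemma bern (x : R) t : 0 <= x -> 1 + t%:R * x <= (1 + x) ^+ t.
Proof.
move=> x0; elim: t => [|t IH]; first by rewrite mul0r addr0 expr0.
rewrite exprS -natr1.
have h : 0 <= t%:R * x by rewrite mulr_ge0.
nra.
Qed.

Lemma upper (x : R) k : 0 <= x <= 1 ->
  (1 + x) ^+ k <= 1 + k%:R * x + 4 ^+ k * x ^+ 2.
Proof.
case/andP => x0 x1; elim: k => [|k IH]; first by rewrite expr0 mul0r addr0 mul1r; nra.
have k4 : k%:R <= (4 : R) ^+ k.
  have := @bern 3 k; rewrite (_ : 1 + 3 = 4 :> R); last by [].
  move=> /(_ (ler0n _ 3)) h; apply: le_trans h; have := ler0n R k; nra.
have f0 : 0 <= (4 : R) ^+ k by rewrite exprn_ge0.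
rewrite exprS exprSr -natr1.
have hx : 0 <= 1 + x by nra.
have := ler_wpM2l hx IH => h; apply: le_trans h _.
have a1 : k%:R * (x * x) <= 4 ^+ k * (x * x) by rewrite ler_wpM2r // mulr_ge0.
have a2 : 4 ^+ k * (x * x) * x <= 4 ^+ k * (x * x).
  by rewrite ler_piMr // mulr_ge0 // mulr_ge0.
rewrite !expr2; nra.
Qed.

Lemma exists_y (q : R) (t k : nat) : 0 <= q -> q <= 1 -> (0 < k)%N ->
  q * k%:R < t%:R -> exists y : R, 1 < y /\ 1 + q * (y ^+ k - 1) < y ^+ t.
Proof.
move=> q0 q1 k0 qt.
set F : R := 4 ^+ k.
have F0 : 0 < F by rewrite exprn_gt0.
have qk0 : 0 <= q * k%:R by rewrite mulr_ge0.
have t0 : 0 < (t%:R : R) by apply: le_lt_trans qt.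
set d := (t%:R - q * k%:R) / (F + t%:R).
have Ft : 0 < F + t%:R by rewrite addr_gt0.
have d0 : 0 < d by rewrite divr_gt0 // subr_gt0.
have d1 : d <= 1 by rewrite ler_pdivrMr // mul1r; nra.
have Fd : F * d < t%:R - q * k%:R.
  rewrite /d mulrCA gtr_pMr ?subr_gt0 // ltr_pdivrMr // mul1r; nra.
exists (1 + d); split; first by rewrite ltrDl.
have hb := @bern d t (ltW d0).
have hu := @upper d k; rewrite d1 (ltW d0) in hu; have {hu} := hu isT.
rewrite -/F => hu.
have e1 : q * ((1 + d) ^+ k - 1) <= q * (k%:R * d + F * d ^+ 2).
  by apply: ler_wpM2l => //; rewrite lerBlDl addrA.
have e2 : q * (k%:R * d + F * d ^+ 2) <= q * k%:R * d + F * d ^+ 2.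
  have g0 : 0 <= F * d ^+ 2 by rewrite mulr_ge0 ?exprn_ge0 ?ltW.
  have : q * (F * d ^+ 2) <= F * d ^+ 2 by rewrite ler_piMl.
  rewrite mulrDr mulrA; lra.
have e3 : q * k%:R * d + F * d ^+ 2 < t%:R * d.
  have : F * d * d < (t%:R - q * k%:R) * d by rewrite ltr_pM2r.
  rewrite expr2 mulrA; nra.
lra.
Qed.


Lemma uniform (I : finType) (a : I -> nat -> R) :
  (forall i, exists rho : R, 0 <= rho /\ rho < 1 /\ forall n, a i n <= rho ^+ n) ->
  exists rho : R, 0 <= rho /\ rho < 1 /\ forall i n, a i n <= rho ^+ n.
Proof.
move=> h; have [f hf] := choice h.
exists (\big[Order.max/0]_i f i); split; [|split].
- exact: bigmax_ge_id.
- by apply/bigmax_ltP; split => // i _; case: (hf i) => _ [].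
move=> i n; case: (hf i) => f0 [_ /(_ n) hn]; apply: le_trans hn _.
by apply: lerXn2r; rewrite ?nnegrE //; [apply: le_trans (bigmax_ge_id _ _ _ _) | apply: le_bigmax].
Qed.

Lemma theta (q : nat -> R) (M rho beta : R) :
  0 <= rho -> rho < 1 -> 0 < beta -> beta < 1 -> 0 <= M ->
  (forall n, (1 <= n)%N -> beta ^+ n <= 1 - q n <= M * rho ^+ n) ->
  one_minus_exp_neg_Theta_n R q.
Proof.
move=> r0 r1 b0 b1 M0 h.
set r := (1 + rho) / 2.
have rr0 : 0 < r by rewrite /r; lra.
have rr1 : r < 1 by rewrite /r; lra.
have rrho : rho <= r by rewrite /r; lra.
set s := (1 + r) / 2.
have s0 : 0 < s by rewrite /s; lra.
have s1 : s < 1 by rewrite /s; lra.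
have rs : r < s by rewrite /s; lra.
set x := s / r - 1.
have x0 : 0 < x by rewrite /x subr_gt0 ltr_pdivlMr // mul1r.
exists (- ln s), (- ln beta), (Num.Def.truncn (M / x)).+1; split; [|split].
- by rewrite oppr_gt0 ln_lt0 // s0 s1.
- by rewrite oppr_gt0 ln_lt0 // b0 b1.
move=> n hn.
have n1 : (1 <= n)%N by apply: leq_trans hn.
have [hl hu] := andP (h n n1).
have eE : forall y : R, 0 < y -> expR (- (- ln y * n%:R)) = y ^+ n.
  by move=> y y0; rewrite mulNr opprK mulrC expRM_natl lnK.
rewrite eE // hl /= eE //; apply: le_trans hu _.
have Mn : M <= n%:R * x.
  rewrite -ler_pdivrMr //; apply: ltW; apply: lt_le_trans (truncnS_gt _) _.
  by rewrite ler_nat.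
have rn : rho ^+ n <= r ^+ n by apply: lerXn2r; rewrite ?nnegrE // ltW.
apply: le_trans (ler_wpM2l M0 rn) _.
apply: le_trans (ler_wpM2r (exprn_ge0 _ (ltW rr0)) Mn) _.
have sr : s = r * (1 + x) by rewrite /x addrC subrK mulrC divfK // gt_eqF.
rewrite sr; have -> : (r * (1 + x)) ^+ n = (1 + x) ^+ n * r ^+ n by rewrite exprMn mulrC.
rewrite ler_pM2r ?exprn_gt0 //.
apply: (le_trans _ (bern x n (ltW x0))); lra.
Qed.

End Cher.
Section Weights.
Variables (R : realType) (m : nat) (p : R).
Hypotheses (p0 : 0 <= p) (p1 : p <= 1).

Local Notation w := (IC R m p).

Lemma w_ge0 A : 0 <= w A.
Proof. by rewrite /IC mulr_ge0 // exprn_ge0 // subr_ge0. Qed.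

Lemma w_prod A : w A = \prod_(i < m) (if i \in A then p else 1 - p).
Proof.
rewrite (bigID (fun i => i \in A)) /=.
rewrite (eq_bigr (fun=> p)); last by move=> i ->.
rewrite [X in _ * X](eq_bigr (fun=> 1 - p)); last by move=> i /negbTE ->.
rewrite !prodr_const /IC; congr (_ ^+ _ * _ ^+ _).
rewrite -{1}(card_ord m) -(cardsC A) addKn.
by apply: eq_card => i; rewrite !inE.
Qed.

Lemma sum_w : \sum_(A : {set 'I_m}) w A = 1.
Proof.
under eq_bigr do rewrite w_prod.
pose h (f : {ffun 'I_m -> bool}) : {set 'I_m} := [set i | f i].
pose g (A : {set 'I_m}) : {ffun 'I_m -> bool} := [ffun i => i \in A].
have hb : bijective h.
  exists g => [f|A]; first by apply/ffunP => i; rewrite ffunE inE.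
  by apply/setP => i; rewrite inE ffunE.
rewrite (reindex h (onW_bij _ hb)) /=.
transitivity (\sum_(f : {ffun 'I_m -> bool}) \prod_(i < m) (if f i then p else 1 - p)).
  by apply: eq_bigr => f _; apply: eq_bigr => i _; rewrite inE.
rewrite -(bigA_distr_bigA (fun (i : 'I_m) (b : bool) => if b then p else 1 - p)) /=.
by rewrite big1 // => i _; rewrite big_bool /= addrC subrK.
Qed.

Lemma w_perm (s : {perm 'I_m}) (A : {set 'I_m}) : w (s @^-1: A) = w A.
Proof. by rewrite /IC card_preimset //; apply: perm_inj. Qed.

Definition mu n (P : profile n m) : R := \prod_(j < n) w (P j).

Lemma mu_ge0 n P : 0 <= mu n P.
Proof. by apply: prodr_ge0 => j _; apply: w_ge0. Qed.

Lemma sum_mu n : \sum_(P : profile n m) mu n P = 1.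
Proof.
rewrite /mu -(bigA_distr_bigA (fun (j : 'I_n) A => w A)) /=.
by rewrite big1 // => j _; rewrite sum_w.
Qed.

Lemma PrICE n (E : profile n m -> Prop) :
  PrIC R n m p E = \sum_P mu n P * (`[< E P >])%:R.
Proof.
rewrite /PrIC big_mkcond /=; apply: eq_bigr => P _.
by case: ifP => _; rewrite ?mulr1 ?mulr0.
Qed.

Lemma PrIC_mono n (E F : profile n m -> Prop) :
  (forall P, E P -> F P) -> PrIC R n m p E <= PrIC R n m p F.
Proof.
move=> EF; rewrite !PrICE; apply: ler_sum => P _.
apply: ler_wpM2l; first exact: mu_ge0.
case: (asboolP (E P)) => [/EF /asboolP -> //|_].
by rewrite ler_nat.
Qed.

Lemma PrIC_ge0 n (E : profile n m -> Prop) : 0 <= PrIC R n m p E.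
Proof. by rewrite PrICE sumr_ge0 // => P _; rewrite mulr_ge0 ?mu_ge0. Qed.

Lemma PrIC_compl n (E : profile n m -> Prop) :
  1 - PrIC R n m p E = PrIC R n m p (fun P => ~ E P).
Proof.
rewrite -(sum_mu n) !PrICE -sumrB; apply: eq_bigr => P _.
rewrite asbool_neg; case: (asboolP (E P)) => _ /=; rewrite ?mulr1 ?mulr0 //.
by rewrite subrr.
by rewrite subr0.
Qed.

Lemma PrIC_atom n (E : profile n m -> Prop) P0 :
  E P0 -> mu n P0 <= PrIC R n m p E.
Proof.
move=> EP0; rewrite PrICE (bigD1 P0) //= (asboolT EP0) mulr1 lerDl.
by rewrite sumr_ge0 // => P _; rewrite mulr_ge0 ?mu_ge0.
Qed.

Lemma PrIC_union n (I : finType) (E : I -> profile n m -> Prop) (F : profile n m -> Prop) :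
  (forall P, F P -> exists i, E i P) ->
  PrIC R n m p F <= \sum_i PrIC R n m p (E i).
Proof.
move=> FE; under eq_bigr do rewrite PrICE.
rewrite exchange_big PrICE /=; apply: ler_sum => P _.
rewrite -mulr_sumr; apply: ler_wpM2l; first exact: mu_ge0.
case: (asboolP (F P)) => [/FE [i Ei]|_]; last by rewrite sumr_ge0.
rewrite (bigD1 i) //= (asboolT Ei) lerDl sumr_ge0 // => *; exact: ler0n.
Qed.


Definition cnt n (S : pred {set 'I_m}) (P : profile n m) : nat :=
  \sum_(j < n) (S (P j) : nat).

Lemma chernoff (S : pred {set 'I_m}) (t k : nat) : (0 < k)%N ->
  (\sum_(A | S A) w A) * k%:R < t%:R ->
  exists rho : R, 0 <= rho /\ rho < 1 /\ forall n,
    PrIC R n m p (fun P => (t * n <= k * cnt n S P)%N) <= rho ^+ n.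
Proof.
move=> k0; set q := \sum_(A | S A) w A => qt.
have q0 : 0 <= q by rewrite sumr_ge0 // => A _; apply: w_ge0.
have q1 : q <= 1.
  rewrite -(sum_w) [X in _ <= X](bigID S) /= lerDl sumr_ge0 // => A _; exact: w_ge0.
have [y [y1 hy]] := @exists_y R q t k q0 q1 k0 qt.
set z := y ^+ k.
have z1 : 1 <= z by rewrite exprn_ege1 // ltW.
have yt0 : 0 < y ^+ t by rewrite exprn_gt0 // (lt_trans ltr01).
exists ((1 + q * (z - 1)) / y ^+ t); split; [|split].
- apply: divr_ge0; last exact: ltW.
  by rewrite addr_ge0 // mulr_ge0 // subr_ge0.
- by rewrite ltr_pdivrMr // mul1r.
move=> n; rewrite PrICE.
apply: (@le_trans _ _ (\sum_(P : profile n m) mu n P * (z ^+ cnt n S P / (y ^+ t) ^+ n))).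
  apply: ler_sum => P _; apply: ler_wpM2l; first exact: mu_ge0.
  have ytn : 0 < (y ^+ t) ^+ n by rewrite exprn_gt0.
  case: (asboolP _) => [h|_]; last first.
    by apply: divr_ge0; [rewrite exprn_ge0 // (le_trans ler01) | exact: ltW].
  rewrite ler_pdivlMr // mul1r -exprM /z -exprM.
  by apply: ler_weXn2l => //; apply: ltW.
under eq_bigr do rewrite mulrA.
rewrite -mulr_suml expr_div_n; apply: ler_wpM2r.
  by rewrite invr_ge0 exprn_ge0 // ltW.
have -> : \sum_(P : profile n m) mu n P * z ^+ cnt n S P =
          \sum_(P : profile n m) \prod_(j < n) (w (P j) * z ^+ S (P j)).
  by apply: eq_bigr => P _; rewrite /mu /cnt expr_sum -big_split.
have -> : \sum_(P : profile n m) \prod_(j < n) (w (P j) * z ^+ S (P j)) =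
   \prod_(j < n) \sum_(A : {set 'I_m}) (w A * z ^+ S A).
  by rewrite bigA_distr_bigA.
rewrite prodr_const card_ord; apply: lerXn2r.
- by rewrite nnegrE sumr_ge0 // => A _; rewrite mulr_ge0 ?w_ge0 // exprn_ge0 // (le_trans ler01).
- by rewrite nnegrE addr_ge0 // mulr_ge0 // subr_ge0.
have -> : \sum_(A : {set 'I_m}) w A * z ^+ S A = \sum_A w A + \sum_(A | S A) w A * (z - 1).
  rewrite [X in _ = _ + X]big_mkcond -big_split /=; apply: eq_bigr => A _.
  case: (S A) => /=; last by rewrite expr0 mulr1 addr0.
  by rewrite expr1 mulrBr mulr1 addrC subrK.
by rewrite sum_w -mulr_suml.
Qed.


Lemma KL (D : {set 'I_m}) x : x \notin D ->
  \sum_A w A * ((x \in A)%:R / (#|A :&: D|.+1)%:R) <= (#|D|.+1)%:R^-1.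
Proof.
move=> xD.
have cDp : #|x |: D| = #|D|.+1 by rewrite cardsU1 xD.
have xDp : x \in x |: D by rewrite setU11.
have step1 : forall A : {set 'I_m}, (x \in A)%:R / (#|A :&: D|.+1)%:R =
    (x \in A)%:R / (#|A :&: (x |: D)|)%:R :> R.
  move=> A; case xA: (x \in A); last by rewrite !mul0r.
  have -> : A :&: (x |: D) = x |: (A :&: D).
    by apply/setP => z; rewrite !inE; case: eqP => [->|]; rewrite ?xA.
  by rewrite cardsU1 inE (negbTE xD) andbF.
under eq_bigr do rewrite step1.
move: (x |: D) cDp xDp => Dp cDp xDp.
pose h y (A : {set 'I_m}) : R := (y \in A)%:R / (#|A :&: Dp|)%:R.
have step2 : forall y, y \in Dp -> \sum_A w A * h y A = \sum_A w A * h x A.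
  move=> y yDp; set s := tperm x y.
  have sK : cancel (fun A : {set 'I_m} => s @^-1: A) (fun A => s @^-1: A).
    by move=> A; apply/setP => z; rewrite !inE tpermK.
  rewrite (reindex_inj (can_inj sK)) /=; apply: eq_bigr => A _.
  rewrite w_perm /h inE tpermR.
  have sDp : s @^-1: Dp = Dp.
    apply/setP => z; rewrite inE; case: tpermP => [->|->|_ _] //.
      by rewrite yDp xDp.
    by rewrite yDp xDp.
  by rewrite -{1}sDp -preimsetI card_preimset //; apply: perm_inj.
have step3 : forall A, \sum_(y in Dp) h y A <= 1.
  move=> A; rewrite /h -mulr_suml.
  have -> : \sum_(y in Dp) (y \in A)%:R = (#|A :&: Dp|)%:R :> R.
    rewrite -sum1_card natr_sum big_mkcond [RHS]big_mkcond /=.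
    apply: eq_bigr => y _; rewrite !inE.
    by case: (y \in A); case: (y \in Dp).
  case: (posnP #|A :&: Dp|) => [->|c0]; first by rewrite mul0r.
  by rewrite divff // pnatr_eq0 -lt0n.
have c0 : 0 < (#|Dp|)%:R :> R by rewrite cDp ltr0n.
rewrite -cDp -(ler_pM2l c0) divff ?gt_eqF //.
rewrite mulr_natl -sumr_const.
rewrite (eq_bigr (fun y => \sum_A w A * h y A)); last by move=> y /step2 ->.
rewrite exchange_big /= -(sum_w); apply: ler_sum => A _.
rewrite -mulr_sumr -[X in _ <= X]mulr1; apply: ler_wpM2l; first exact: w_ge0.
exact: step3.
Qed.


Lemma sum_ind (D A : {set 'I_m}) :
  \sum_(y in D) (y \in A)%:R = (#|A :&: D|)%:R :> R.
Proof.
rewrite -sum1_card natr_sum big_mkcond [RHS]big_mkcond /=.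
apply: eq_bigr => y _; rewrite !inE.
by case: (y \in A); case: (y \in D).
Qed.

Lemma card_split (A B C : {set 'I_m}) :
  #|A :&: B| = (#|A :&: B :&: C| + #|A :&: (B :\: C)|)%N.
Proof. by rewrite finset.setIDA cardsID. Qed.

Definition S_core (W W' : {set 'I_m}) : pred {set 'I_m} :=
  fun A => (#|A :&: W| < #|A :&: W'|)%N.

Lemma core_bound (W W' : {set 'I_m}) k : #|W| = k -> (1 <= #|W'|)%N ->
  (#|W'| <= k)%N ->
  (\sum_(A | S_core W W' A) w A) * k%:R < (#|W'|)%:R.
Proof.
move=> Wk t1 tk.
set D' := W' :\: W; set D := W :\: W'.
have pt : forall A, (S_core W W' A)%:R <=
    \sum_(x in D') (x \in A)%:R / (#|A :&: D|.+1)%:R :> R.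
  move=> A; case SA: (S_core W W' A); last first.
    by rewrite sumr_ge0 // => x _; rewrite divr_ge0.
  rewrite -mulr_suml sum_ind ler_pdivlMr // mul1r ler_nat.
  move: SA; rewrite /S_core (card_split A W W') (card_split A W' W).
  by rewrite finset.setIAC -/D' -/D ltn_add2l.
have h1 : \sum_(A | S_core W W' A) w A <=
    \sum_(x in D') \sum_A w A * ((x \in A)%:R / (#|A :&: D|.+1)%:R).
  rewrite exchange_big /= big_mkcond /=; apply: ler_sum => A _.
  rewrite -mulr_sumr; case SA: (S_core W W' A).
    have := pt A; rewrite SA => hA.
    by rewrite -[X in X <= _]mulr1 ler_wpM2l ?w_ge0.
  by rewrite mulr_ge0 ?w_ge0 // sumr_ge0 // => x _; rewrite divr_ge0.
have h2 : \sum_(x in D') \sum_A w A * ((x \in A)%:R / (#|A :&: D|.+1)%:R)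
    <= \sum_(x in D') (#|D|.+1)%:R^-1.
  apply: ler_sum => x; rewrite !inE => /andP [xW _]; apply: KL.
  by rewrite !inE (negbTE xW) andbF.
rewrite sumr_const in h2.
have e1 : (#|W :&: W'| + #|D|)%N = k by rewrite -Wk cardsID.
have e2 : (#|W :&: W'| + #|D'|)%N = #|W'| by rewrite finset.setIC cardsID.
have nat_ineq : (#|D'| * k < #|W'| * #|D|.+1)%N by nia.
have c0 : 0 < (#|D|.+1)%:R :> R by rewrite ltr0n.
apply: (le_lt_trans (ler_wpM2r (ler0n _ k) (le_trans h1 h2))).
by rewrite -(mulr_natr ((#|D|.+1)%:R^-1) #|D'|) -mulrA mulrC ltr_pdivrMr // -!natrM ltr_nat.
Qed.

Definition S_ejr (W : {set 'I_m}) (a : 'I_m) (l : nat) : pred {set 'I_m} :=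
  fun A => (a \in A) && (#|A :&: W| < l)%N.

Lemma ejr_bound (W : {set 'I_m}) a l k : #|W| = k -> a \notin W -> (1 <= l)%N ->
  (\sum_(A | S_ejr W a l A) w A) * k%:R < l%:R.
Proof.
move=> Wk aW l1.
have h1 : \sum_(A | S_ejr W a l A) w A <=
    l%:R * \sum_A w A * ((a \in A)%:R / (#|A :&: W|.+1)%:R).
  rewrite mulr_sumr big_mkcond /=; apply: ler_sum => A _.
  case SA: (S_ejr W a l A); last first.
    by rewrite mulr_ge0 ?ler0n // mulr_ge0 ?w_ge0 // divr_ge0.
  move: SA => /andP [aA lt]; rewrite aA mulrCA -[X in X <= _]mulr1.
  rewrite ler_wpM2l ?w_ge0 // mul1r mulrC ler_pdivlMl ?ltr0n // mulr1 ler_nat //.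
have h2 := @KL W a aW.
have c0 : 0 < (#|W|.+1)%:R :> R by rewrite ltr0n.
apply: (le_lt_trans (ler_wpM2r (ler0n _ k) (le_trans h1 (ler_wpM2l (ler0n _ l) h2)))).
rewrite Wk -mulrA gtr_pMr ?ltr0n // mulrC ltr_pdivrMr ?ltr0n // mul1r ltr_nat //.
Qed.

End Weights.

Lemma PrIC_False (R : realType) n m (p : R) (E : profile n m -> Prop) :
  (forall P, ~ E P) -> PrIC R n m p E = 0.
Proof. by move=> h; rewrite /PrIC big_pred0 // => P; rewrite asboolF. Qed.

Lemma rat_ineq (a b c d : nat) : (0 < b)%N -> (0 < d)%N ->
  ((a%:R / b%:R : rat) <= c%:R / d%:R) -> (a * d <= c * b)%N.
Proof.
move=> b0 d0; rewrite ler_pdivrMr ?ltr0n // mulrAC ler_pdivlMr ?ltr0n //.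
by rewrite -!natrM ler_nat.
Qed.

Lemma rat_ineq2 (a b c d : nat) : (0 < b)%N ->
  ((a%:R * d%:R / b%:R : rat) <= c%:R) -> (a * d <= c * b)%N.
Proof.
move=> b0; rewrite ler_pdivrMr ?ltr0n //.
by rewrite -!natrM ler_nat.
Qed.

Lemma cnt_ge n m (S : pred {set 'I_m}) (P : profile n m) (N' : {set 'I_n}) :
  (forall j, j \in N' -> S (P j)) -> (#|N'| <= cnt m n S P)%N.
Proof.
move=> h; rewrite -sum1_card /cnt [X in (X <= _)%N]big_mkcond /=.
apply: leq_sum => j _; case: ifP => // /h ->; done.
Qed.

Section Main.
Variables (R : realType) (m k : nat) (p : R).
Hypotheses (k0 : (0 < k)%N) (km : (k < m)%N) (p0 : 0 < p) (p1 : p < 1).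

Let a0 : 'I_m := Ordinal km.
Let W0 : {set 'I_m} := [set widen_ord (ltnW km) i | i : 'I_k].

Lemma W0k : #|W0| = k.
Proof.
rewrite card_imset ?card_ord // => i j /(congr1 val) /= ij; exact: val_inj.
Qed.

Lemma a0W0 : a0 \notin W0.
Proof.
apply/imsetP => -[i _ /(congr1 val) /= ei].
by move: (ltn_ord i); rewrite -ei ltnn.
Qed.

Definition P0 n : profile n m := [ffun=> [set a0]].

Let beta := p * (1 - p) ^+ (m - 1).

Lemma beta_bounds : 0 < beta /\ beta < 1.
Proof.
split; first by rewrite mulr_gt0 // exprn_gt0 // subr_gt0.
apply: le_lt_trans p1; rewrite /beta; apply: ler_piMr; first exact: ltW.
have h1 : 0 <= 1 - p by rewrite subr_ge0 ltW.
have h2 : 1 - p <= 1 by rewrite lerBlDr lerDl ltW.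
exact: exprn_ile1.
Qed.

Lemma muP0 n : mu R m p n (P0 n) = beta ^+ n.
Proof.
rewrite /mu (eq_bigr (fun=> beta)) ?prodr_const ?card_ord // => j _.
by rewrite ffunE /IC cards1.
Qed.

Lemma inter0 : #|[set a0] :&: W0| = 0%N.
Proof.
rewrite (_ : _ :&: _ = finset.set0) ?cards0 //.
apply/setP => z; rewrite !inE; case: eqP => // ->; exact: negbTE a0W0.
Qed.


Definition Ecore n (i : {set 'I_m} * {set 'I_m}) (P : profile n m) : Prop :=
  [/\ #|i.1| = k, (1 <= #|i.2|)%N, (#|i.2| <= k)%N &
      (#|i.2| * n <= k * cnt m n (S_core m i.1 i.2) P)%N].

Lemma core_fail n (P : profile n m) : (0 < n)%N ->
  ~ (CORE n m k P = committees m k) -> exists i, Ecore n i P.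
Proof.
move=> n0 hne; apply: contrapT => hno; apply: hne.
apply/seteqP; split => W /=.
  by case.
move=> Wk; split => // N' W' N0 rat.
apply: contrapT => hnj.
have hj : forall j, j \in N' -> S_core m W W' (P j).
  move=> j jN; rewrite /S_core ltnNge; apply/negP => hle; apply: hnj; by exists j.
have c1 := @cnt_ge n m _ P N' hj.
have r := @rat_ineq _ _ _ _ k0 n0 rat.
have Nn : (#|N'| <= n)%N by rewrite -[X in (_ <= X)%N](card_ord n) max_card.
have [j jN] : exists j, j \in N' by apply/card_gt0P.
have t1 : (1 <= #|W'|)%N.
  have := hj j jN; rewrite /S_core => h.
  apply: leq_ltn_trans (leq0n _) (leq_trans h _).
  by apply: subset_leq_card; apply: finset.subsetIr.
have tk : (#|W'| <= k)%N by nia.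
apply: hno; exists (W, W'); split => //=.
apply: leq_trans r _.
by rewrite mulnC leq_mul2l c1 orbT.
Qed.

Lemma core_upper : exists rho : R, 0 <= rho /\ rho < 1 /\ forall i n,
  PrIC R n m p (Ecore n i) <= rho ^+ n.
Proof.
apply: (@uniform R _ (fun i n => PrIC R n m p (Ecore n i))) => -[W W'].
case: (pselect ([/\ #|W| = k, (1 <= #|W'|)%N & (#|W'| <= k)%N])) => [[Wk t1 tk]|hn].
  have hb := @core_bound R m p (ltW p0) (ltW p1) W W' k Wk t1 tk.
  have [rho [r0 [r1 hr]]] := @chernoff R m p (ltW p0) (ltW p1) _ _ _ k0 hb.
  exists rho; split => //; split => // n; apply: le_trans (hr n).
  by apply: (@PrIC_mono R m p (ltW p0) (ltW p1)) => P [].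
exists 0; split => //; split => // n.
rewrite PrIC_False; first by rewrite exprn_ge0.
by move=> P [Wk t1 tk _]; apply: hn.
Qed.

Lemma core_part : one_minus_exp_neg_Theta_n R
    (fun n => PrIC R n m p (fun P : profile n m => CORE n m k P = committees m k)).
Proof.
have [rho [r0 [r1 hr]]] := core_upper.
have [b0 b1] := beta_bounds.
apply: (@theta R _ (#|{: {set 'I_m} * {set 'I_m}}|%:R) rho beta r0 r1 b0 b1 (ler0n _ _)).
move=> n n0; rewrite PrIC_compl; apply/andP; split.
  rewrite -muP0; apply: (@PrIC_atom R m p (ltW p0) (ltW p1)) => e.
  have : committees m k W0 by exact: W0k.
  rewrite -e => -[_ h].
  have := h [set: 'I_n] [set a0]; rewrite cardsT card_ord cards1 => /(_ n0).
  case.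
    by rewrite divff ?pnatr_eq0 -?lt0n // ler_pdivrMr ?ltr0n // mul1r ler1n.
  by move=> j _; rewrite ffunE finset.setIid cards1 inter0.
apply: le_trans (@PrIC_union R m p (ltW p0) (ltW p1) _ _ _ _ (fun P => @core_fail n P n0)) _.
apply: le_trans (ler_sum _ (fun i _ => hr i n)) _.
by rewrite sumr_const mulr_natl.
Qed.


Definition Eejr n (i : {set 'I_m} * 'I_m * 'I_k.+1) (P : profile n m) : Prop :=
  [/\ #|i.1.1| = k, i.1.2 \notin i.1.1, (1 <= i.2)%N &
      (i.2 * n <= k * cnt m n (S_ejr m i.1.1 i.1.2 i.2) P)%N].

Lemma ejr_fail n (P : profile n m) : (0 < n)%N ->
  ~ (EJRp n m k P = committees m k) -> exists i, Eejr n i P.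
Proof.
move=> n0 hne; apply: contrapT => hno; apply: hne.
apply/seteqP; split => W /=.
  by case.
move=> Wk; split => // -[a [l [N' [aW l1 rat hj]]]].
have r := @rat_ineq2 _ _ _ _ k0 rat.
have hj' : forall j, j \in N' -> S_ejr m W a l (P j).
  by move=> j /hj [aP lt]; rewrite /S_ejr aP lt.
have c1 := @cnt_ge n m _ P N' hj'.
have Nn : (#|N'| <= n)%N by rewrite -[X in (_ <= X)%N](card_ord n) max_card.
have lk : (l < k.+1)%N by rewrite ltnS; nia.
apply: hno; exists ((W, a), Ordinal lk); split => //=.
apply: leq_trans r _.
by rewrite mulnC leq_mul2l c1 orbT.
Qed.

Lemma ejr_upper : exists rho : R, 0 <= rho /\ rho < 1 /\ forall i n,
  PrIC R n m p (Eejr n i) <= rho ^+ n.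
Proof.
apply: (@uniform R _ (fun i n => PrIC R n m p (Eejr n i))) => -[[W a] l].
case: (pselect ([/\ #|W| = k, a \notin W & (1 <= l)%N])) => [[Wk aW l1]|hn].
  have hb := @ejr_bound R m p (ltW p0) (ltW p1) W a l k Wk aW l1.
  have [rho [r0 [r1 hr]]] := @chernoff R m p (ltW p0) (ltW p1) _ _ _ k0 hb.
  exists rho; split => //; split => // n; apply: le_trans (hr n).
  by apply: (@PrIC_mono R m p (ltW p0) (ltW p1)) => P [].
exists 0; split => //; split => // n.
rewrite PrIC_False; first by rewrite exprn_ge0.
by move=> P [Wk aW l1 _]; apply: hn.
Qed.

Lemma ejr_part : one_minus_exp_neg_Theta_n R
    (fun n => PrIC R n m p (fun P : profile n m => EJRp n m k P = committees m k)).
Proof.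
have [rho [r0 [r1 hr]]] := ejr_upper.
have [b0 b1] := beta_bounds.
apply: (@theta R _ (#|{: {set 'I_m} * 'I_m * 'I_k.+1}|%:R) rho beta r0 r1 b0 b1 (ler0n _ _)).
move=> n n0; rewrite PrIC_compl; apply/andP; split.
  rewrite -muP0; apply: (@PrIC_atom R m p (ltW p0) (ltW p1)) => e.
  have : committees m k W0 by exact: W0k.
  rewrite -e => -[_ h]; apply: h.
  exists a0, 1%N, [set: 'I_n]; split => //.
  - exact: a0W0.
  - rewrite cardsT card_ord mul1r ler_pdivrMr ?ltr0n // -natrM ler_nat.
    by rewrite leq_pmulr.
  - by move=> j _; rewrite ffunE finset.set11 inter0.
apply: le_trans (@PrIC_union R m p (ltW p0) (ltW p1) _ _ _ _ (fun P => @ejr_fail n P n0)) _.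
apply: le_trans (ler_sum _ (fun i _ => hr i n)) _.
by rewrite sumr_const mulr_natl.
Qed.

End Main.

Theorem corollary3 (R : realType) (m k : nat) (p : R) :
  (0 < k)%N -> (k < m)%N -> 0 < p -> p < 1 ->
  one_minus_exp_neg_Theta_n R
    (fun n => PrIC R n m p (fun P : profile n m => CORE n m k P = committees m k)) /\
  one_minus_exp_neg_Theta_n R
    (fun n => PrIC R n m p (fun P : profile n m => EJRp n m k P = committees m k)).
Proof.
move=> k0 km p0 p1; split; [exact: core_part | exact: ejr_part].
Qed.
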